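(* Let $f\colon S^1\to S^1$ be a homeomorphism of the circle such that the restriction $f|_{\Omega(f)}$ of $f$ to its nonwandering set has the pseudo-orbit tracing property. Then $f$ has a periodic point.
   Context: The nonwandering set $\Omega(f)$ is the set of $x$ such that for every neighborhood $U$ of $x$ there is $n\ge1$ with $f^n(U)\cap U\neq\emptyset$; it is compact and $f$-invariant. For a homeomorphism $g\colon Y\to Y$ of a metric space $(Y,d)$: a bi-infinite sequence $(x_i)_{i\in\mathbb{Z}}$ is a $\delta$-pseudo-orbit if $d(g(x_i),x_{i+1})\le\delta$ for all $i$; it is $\epsilon$-shadowed if there is $x\in Y$ with $d(g^i(x),x_i)\le\epsilon$ for all $i\in\mathbb{Z}$; $g$ has the pseudo-orbit tracing property if for every $\epsilon>0$ there is $\delta>0$ such that every $\delta$-pseudo-orbit can be $\epsilon$-shadowed. *)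

(* Defs.v *)
From Stdlib Require Import Reals ZArith.
Open Scope R_scope.

Definition S1 : Type := { p : R * R | (fst p) ^ 2 + (snd p) ^ 2 = 1 }.

Definition dist (a b : S1) : R :=
  sqrt ((fst (proj1_sig a) - fst (proj1_sig b)) ^ 2
        + (snd (proj1_sig a) - snd (proj1_sig b)) ^ 2).

Definition continuous_S1 (f : S1 -> S1) : Prop :=
  forall x (eps : R), eps > 0 ->
    exists delta, delta > 0 /\ forall y, dist x y < delta -> dist (f x) (f y) < eps.

Definition homeo_S1 (f g : S1 -> S1) : Prop :=
  continuous_S1 f /\ continuous_S1 g /\
  (forall x, g (f x) = x) /\ (forall x, f (g x) = x).

Definition ziter (f g : S1 -> S1) (i : Z) (x : S1) : S1 :=
  match i with
  | Z0 => x
  | Zpos p => Nat.iter (Pos.to_nat p) f x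
  | Zneg p => Nat.iter (Pos.to_nat p) g x
  end.

Definition nbhd (U : S1 -> Prop) (x : S1) : Prop :=
  exists r, r > 0 /\ forall y, dist x y < r -> U y.

Definition nonwandering (f : S1 -> S1) (x : S1) : Prop :=
  forall U : S1 -> Prop, nbhd U x ->
    exists n : nat, (n >= 1)%nat /\ exists y, U y /\ U (Nat.iter n f y).

(* Pseudo-orbit tracing property of the restriction of the homeomorphism f
   (inverse g) to an f-invariant set A, with the metric induced from S^1:
   sequences and shadowing points are required to lie in A. *)
Definition POTP_on (A : S1 -> Prop) (f g : S1 -> S1) : Prop :=
  forall eps, eps > 0 -> exists delta, delta > 0 /\
    forall xs : Z -> S1,
      (forall i, A (xs i)) ->
      (forall i, dist (f (xs i)) (xs (i + 1)%Z) <= delta) ->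
      exists x, A x /\ forall i, dist (ziter f g i x) (xs i) <= eps.

(* Main.v *)
Require Import Defs.
From Stdlib Require Import Reals ZArith Lia Psatz.
From Stdlib Require Import ProofIrrelevance Classical IndefiniteDescription Ranalysis5 Rtopology.
Open Scope R_scope.
Local Notation dist := Defs.dist.

Definition X (a : S1) : R := fst (proj1_sig a).
Definition Y (a : S1) : R := snd (proj1_sig a).
Definition dot (a b : S1) : R := X a * X b + Y a * Y b.
Definition cross (a b : S1) : R := X a * Y b - Y a * X b.

Lemma unit (a : S1) : X a ^ 2 + Y a ^ 2 = 1.
Proof. exact (proj2_sig a). Qed.

Lemma S1_eq (a b : S1) : X a = X b -> Y a = Y b -> a = b.
Proof.
  destruct a as [[a1 a2] Ha], b as [[b1 b2] Hb]; unfold X, Y; simpl; intros -> ->.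
  f_equal; apply proof_irrelevance.
Qed.

Lemma dist_alt a b : dist a b = sqrt (2 - 2 * dot a b).
Proof.
  unfold dist, dot; fold (X a) (X b) (Y a) (Y b). f_equal.
  pose proof (unit a); pose proof (unit b). nra.
Qed.

Lemma dist_pos a b : 0 <= dist a b.
Proof. unfold dist; apply sqrt_pos. Qed.

Lemma dot_le1 a b : dot a b <= 1.
Proof. unfold dot; pose proof (unit a); pose proof (unit b).
  pose proof (pow2_ge_0 (X a - X b)); pose proof (pow2_ge_0 (Y a - Y b)); nra. Qed.

Lemma dist_sq a b : dist a b ^ 2 = 2 - 2 * dot a b.
Proof.
  rewrite dist_alt. simpl. rewrite Rmult_1_r. rewrite sqrt_sqrt; [ring|].
  pose proof (dot_le1 a b); lra.
Qed.

Lemma dist_sym a b : dist a b = dist b a.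
Proof. rewrite !dist_alt; unfold dot; f_equal; ring. Qed.

Lemma dist_refl a : dist a a = 0.
Proof. rewrite dist_alt. unfold dot. pose proof (unit a).
  replace (2 - 2 * (X a * X a + Y a * Y a)) with 0 by nra. apply sqrt_0. Qed.

Lemma dist_0_eq a b : dist a b = 0 -> a = b.
Proof.
  unfold dist; fold (X a) (X b) (Y a) (Y b); intro H.
  pose proof (pow2_ge_0 (X a - X b)); pose proof (pow2_ge_0 (Y a - Y b)).
  apply sqrt_eq_0 in H; [|lra].
  assert (E1 : (X a - X b)^2 = 0) by lra. assert (E2 : (Y a - Y b)^2 = 0) by lra.
  assert (F1 : X a - X b = 0) by (apply Rsqr_0_uniq; unfold Rsqr; lra).
  assert (F2 : Y a - Y b = 0) by (apply Rsqr_0_uniq; unfold Rsqr; lra).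
  apply S1_eq; lra.
Qed.

Lemma cross_dot a b : cross a b ^ 2 + dot a b ^ 2 = 1.
Proof. unfold cross, dot; pose proof (unit a); pose proof (unit b). nra. Qed.

Lemma dist_tri a b c : dist a c <= dist a b + dist b c.
Proof.
  unfold dist; fold (X a) (X b) (Y a) (Y b) (X c) (Y c).
  set (u1 := X a - X b); set (u2 := Y a - Y b); set (v1 := X b - X c); set (v2 := Y b - Y c).
  replace (X a - X c) with (u1 + v1) by (unfold u1, v1; ring).
  replace (Y a - Y c) with (u2 + v2) by (unfold u2, v2; ring).
  assert (Hu : 0 <= u1^2 + u2^2) by nra. assert (Hv : 0 <= v1^2+v2^2) by nra.
  pose proof (sqrt_pos (u1^2+u2^2)) as Su. pose proof (sqrt_pos (v1^2+v2^2)) as Sv.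
  pose proof (sqrt_sqrt _ Hu) as Eu. pose proof (sqrt_sqrt _ Hv) as Ev.
  apply Rsqr_incr_0_var; [|lra]. unfold Rsqr.
  rewrite sqrt_sqrt by (pose proof (pow2_ge_0 (u1+v1)); pose proof (pow2_ge_0 (u2+v2)); lra).
  assert (CS : u1*v1 + u2*v2 <= sqrt (u1^2+u2^2) * sqrt (v1^2+v2^2)).
  { destruct (Rle_dec (u1*v1+u2*v2) 0); [nra|].
    apply Rsqr_incr_0_var; [|nra]. unfold Rsqr.
    replace (sqrt (u1 ^ 2 + u2 ^ 2) * sqrt (v1 ^ 2 + v2 ^ 2) *
      (sqrt (u1 ^ 2 + u2 ^ 2) * sqrt (v1 ^ 2 + v2 ^ 2))) with
      ((sqrt (u1 ^ 2 + u2 ^ 2) * sqrt (u1 ^ 2 + u2 ^ 2)) * (sqrt (v1 ^ 2 + v2 ^ 2) * sqrt (v1 ^ 2 + v2 ^ 2))) by ring.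
    rewrite Eu, Ev. pose proof (pow2_ge_0 (u1*v2 - u2*v1)). nra. }
  replace ((sqrt (u1 ^ 2 + u2 ^ 2) + sqrt (v1 ^ 2 + v2 ^ 2)) * (sqrt (u1 ^ 2 + u2 ^ 2) + sqrt (v1 ^ 2 + v2 ^ 2)))
   with (sqrt (u1 ^ 2 + u2 ^ 2) * sqrt (u1 ^ 2 + u2 ^ 2) + sqrt (v1 ^ 2 + v2 ^ 2) * sqrt (v1 ^ 2 + v2 ^ 2)
     + 2 * (sqrt (u1 ^ 2 + u2 ^ 2) * sqrt (v1 ^ 2 + v2 ^ 2))) by ring.
  rewrite Eu, Ev. nra.
Qed.

Lemma abs_cross_le a b : Rabs (cross a b) <= dist a b.
Proof.
  pose proof (cross_dot a b); pose proof (dist_sq a b); pose proof (dist_pos a b).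
  pose proof (dot_le1 a b).
  rewrite <- (Rabs_pos_eq (dist a b)) by auto.
  apply (Rsqr_le_abs_0 (cross a b) (dist a b)). unfold Rsqr. nra.
Qed.

Lemma Rabs_le_inv x a : Rabs x <= a -> - a <= x <= a.
Proof. unfold Rabs; destruct (Rcase_abs x); intros; lra. Qed.

Lemma cs1 t : cos t ^ 2 + sin t ^ 2 = 1.
Proof. pose proof (sin2_cos2 t) as H; unfold Rsqr in H; simpl; lra. Qed.

Lemma rot_ok (p : S1) (t : R) :
  (X p * cos t - Y p * sin t) ^ 2 + (Y p * cos t + X p * sin t) ^ 2 = 1.
Proof.
  pose proof (unit p); pose proof (cs1 t).
  replace ((X p * cos t - Y p * sin t) ^ 2 + (Y p * cos t + X p * sin t) ^ 2)
    with ((X p ^ 2 + Y p ^ 2) * (cos t ^ 2 + sin t ^ 2)) by ring.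
  rewrite H, H0; ring.
Qed.

Definition rot (p : S1) (t : R) : S1 :=
  exist _ (X p * cos t - Y p * sin t, Y p * cos t + X p * sin t) (rot_ok p t).

Lemma X_rot p t : X (rot p t) = X p * cos t - Y p * sin t.
Proof. reflexivity. Qed.
Lemma Y_rot p t : Y (rot p t) = Y p * cos t + X p * sin t.
Proof. reflexivity. Qed.

Ltac rsimpl := repeat (rewrite X_rot || rewrite Y_rot).

Definition ang (p q : S1) : R := asin (cross p q).

Definition btw (a b r : R) : Prop := Rmin a b <= r <= Rmax a b.

Lemma rot_0 p : rot p 0 = p.
Proof. apply S1_eq; rsimpl; rewrite cos_0, sin_0; ring. Qed.

Lemma cross_rot p t : cross p (rot p t) = sin t.
Proof.
  unfold cross; rsimpl. pose proof (unit p).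
  replace (X p * (Y p * cos t + X p * sin t) - Y p * (X p * cos t - Y p * sin t))
    with ((X p ^ 2 + Y p ^ 2) * sin t) by ring. rewrite H; ring.
Qed.

Lemma dot_rot p t : dot p (rot p t) = cos t.
Proof.
  unfold dot; rsimpl. pose proof (unit p).
  replace (X p * (X p * cos t - Y p * sin t) + Y p * (Y p * cos t + X p * sin t))
    with ((X p ^ 2 + Y p ^ 2) * cos t) by ring. rewrite H; ring.
Qed.

Lemma dot_rot2 p s t : dot (rot p s) (rot p t) = cos (s - t).
Proof.
  unfold dot; rsimpl; rewrite cos_minus. pose proof (unit p).
  replace ((X p * cos s - Y p * sin s) * (X p * cos t - Y p * sin t) +
    (Y p * cos s + X p * sin s) * (Y p * cos t + X p * sin t))
    with ((X p ^ 2 + Y p ^ 2) * (cos s * cos t + sin s * sin t)) by ring. rewrite H; ring.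
Qed.

Lemma rot_rot p s t : rot (rot p s) t = rot p (s + t).
Proof.
  apply S1_eq; rsimpl; rewrite cos_plus, sin_plus; ring.
Qed.

Lemma ang_rot p t : - (PI / 2) <= t <= PI / 2 -> ang p (rot p t) = t.
Proof. intro H; unfold ang; rewrite cross_rot; apply asin_sin; lra. Qed.

Lemma rot_ang p q : 0 < dot p q -> rot p (ang p q) = q.
Proof.
  intro Hd. pose proof (cross_dot p q) as Hcd. pose proof (unit p) as Hp.
  assert (Hc : -1 <= cross p q <= 1).
  { pose proof (pow2_ge_0 (dot p q)). split; nra. }
  assert (Ec : cos (ang p q) = dot p q).
  { unfold ang; rewrite cos_asin by exact Hc.
    rewrite <- (sqrt_pow2 (dot p q)) by lra. f_equal. unfold Rsqr; nra. }
  assert (Es : sin (ang p q) = cross p q) by (unfold ang; apply sin_asin; exact Hc).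
  apply S1_eq; rsimpl; rewrite Ec, Es; unfold dot, cross;
  pose proof (unit q).
  - replace (X p * (X p * X q + Y p * Y q) - Y p * (X p * Y q - Y p * X q))
      with ((X p ^ 2 + Y p ^ 2) * X q) by ring. rewrite Hp; ring.
  - replace (Y p * (X p * X q + Y p * Y q) + X p * (X p * Y q - Y p * X q))
      with ((X p ^ 2 + Y p ^ 2) * Y q) by ring. rewrite Hp; ring.
Qed.

Lemma abs_sin_le v : Rabs (sin v) <= Rabs v.
Proof.
  assert (K : forall w, 0 <= w -> Rabs (sin w) <= w).
  { intros w Hw. destruct (Req_dec w 0) as [->|Hn]; [rewrite sin_0, Rabs_R0; lra|].
    pose proof (sin_lt_x w ltac:(lra)). pose proof (SIN_bound w). pose proof PI2_1.
    destruct (Rle_dec 1 w).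
    - apply Rabs_le; lra.
    - pose proof (sin_ge_0 w ltac:(lra) ltac:(lra)). rewrite Rabs_pos_eq; lra. }
  destruct (Rle_dec 0 v).
  - rewrite (Rabs_pos_eq v) by lra. apply K; lra.
  - rewrite (Rabs_left v) by lra. assert (E : sin v = - sin (- v)) by (rewrite sin_neg; ring).
    rewrite E, Rabs_Ropp. apply K; lra.
Qed.

Lemma two_minus_cos u : 2 - 2 * cos u <= u ^ 2.
Proof.
  assert (Eu : u = 2 * (u / 2)) by field. set (a := u / 2) in *.
  rewrite Eu, cos_2a_sin.
  pose proof (Rsqr_le_abs_1 _ _ (abs_sin_le a)) as H. unfold Rsqr in H. nra.
Qed.

Lemma dist_rot p s t : dist (rot p s) (rot p t) <= Rabs (s - t).
Proof.
  rewrite dist_alt, dot_rot2. rewrite <- (sqrt_Rsqr_abs (s - t)).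
  apply sqrt_le_1_alt. pose proof (two_minus_cos (s - t)). unfold Rsqr; simpl in *; lra.
Qed.

Lemma dist_lt1_dot p q : dist p q < 1 -> 1/2 < dot p q.
Proof.
  intro H. pose proof (dist_sq p q). pose proof (dist_pos p q). nra.
Qed.

Lemma sqrt2_bounds : 1 < sqrt 2 < 2.
Proof.
  pose proof (sqrt_sqrt 2 ltac:(lra)). pose proof (sqrt_pos 2). nra.
Qed.

Lemma ang_bound p q : - (PI/2) <= ang p q <= PI/2.
Proof. apply asin_bound. Qed.

Lemma ang_small p q : dist p q <= 1/2 -> Rabs (ang p q) < PI / 4.
Proof.
  intro H. pose proof (abs_cross_le p q) as Hc. pose proof (ang_bound p q) as Hb.
  pose proof PI_RGT_0. pose proof sqrt2_bounds.
  assert (Hs : sin (ang p q) = cross p q).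
  { unfold ang; apply sin_asin. pose proof (cross_dot p q). pose proof (pow2_ge_0 (dot p q)).
    split; nra. }
  assert (S4 : 1/2 < sin (PI/4)).
  { rewrite sin_PI4. apply (Rmult_lt_reg_r (sqrt 2)); [lra|].
    field_simplify; lra. }
  apply Rabs_def1.
  - destruct (Rlt_dec (ang p q) (PI/4)) as [|Hn]; [auto|exfalso].
    pose proof (sin_incr_1 (PI/4) (ang p q) ltac:(lra) ltac:(lra) ltac:(lra) ltac:(lra) ltac:(lra)).
    apply Rabs_le_inv in Hc. lra.
  - destruct (Rlt_dec (- (PI/4)) (ang p q)) as [|Hn]; [auto|exfalso].
    pose proof (sin_incr_1 (ang p q) (-(PI/4)) ltac:(lra) ltac:(lra) ltac:(lra) ltac:(lra) ltac:(lra)).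
    rewrite sin_neg in H2. apply Rabs_le_inv in Hc. lra.
Qed.

Lemma cos_abs x : cos (Rabs x) = cos x.
Proof. destruct (Rle_dec 0 x); [rewrite Rabs_pos_eq by lra; auto|rewrite Rabs_left by lra; apply cos_neg]. Qed.

Lemma dist_rot_le p q r : 0 < dot p q -> btw 0 (ang p q) r -> dist p (rot p r) <= dist p q.
Proof.
  intros Hd Hr. pose proof (ang_bound p q) as Hb. unfold btw in Hr.
  assert (Eq : dot p q = cos (ang p q)).
  { rewrite <- (rot_ang p q Hd) at 1. apply dot_rot. }
  rewrite !dist_alt, dot_rot, Eq.
  apply sqrt_le_1_alt. rewrite <- (cos_abs r), <- (cos_abs (ang p q)).
  assert (Rabs r <= Rabs (ang p q)).
  { unfold Rmin, Rmax in Hr. destruct (Rle_dec 0 (ang p q)).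
    - rewrite !Rabs_pos_eq; lra.
    - rewrite !Rabs_left1; lra. }
  pose proof (Rabs_pos r). pose proof (Rabs_pos (ang p q)). pose proof PI_RGT_0.
  assert (Rabs (ang p q) <= PI/2) by (apply Rabs_le; lra).
  pose proof (cos_decr_1 (Rabs r) (Rabs (ang p q)) ltac:(lra) ltac:(lra) ltac:(lra) ltac:(lra) ltac:(lra)).
  lra.
Qed.

Lemma cont_pt_intro (F : R -> R) x :
  (forall eps, 0 < eps -> exists d, 0 < d /\ forall y, Rabs (y - x) < d -> Rabs (F y - F x) < eps) ->
  continuity_pt F x.
Proof.
  intros H eps Heps. destruct (H eps Heps) as [d [Hd Hy]].
  exists d; split; auto. intros y [_ Hy']. apply Hy. exact Hy'.
Qed.

Lemma cont_iter (k : S1 -> S1) n : continuous_S1 k -> continuous_S1 (Nat.iter n k).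
Proof.
  intro Hk. induction n as [|n IH]; simpl.
  - intros x eps He. exists eps; split; auto.
  - intros x eps He. destruct (Hk (Nat.iter n k x) eps He) as [d1 [Hd1 H1]].
    destruct (IH x d1 Hd1) as [d2 [Hd2 H2]]. exists d2; split; auto.
    intros y Hy; apply H1, H2, Hy.
Qed.

Lemma cross_lip a u v : Rabs (cross a u - cross a v) <= dist u v.
Proof.
  pose proof (dist_sq u v) as Hs. pose proof (dist_pos u v). pose proof (unit a).
  rewrite <- (Rabs_pos_eq (dist u v)) by auto. apply Rsqr_le_abs_0.
  assert (E : dist u v ^ 2 = (X u - X v) ^ 2 + (Y u - Y v) ^ 2).
  { rewrite Hs. unfold dot. pose proof (unit u); pose proof (unit v); nra. }
  unfold Rsqr. replace (dist u v * dist u v) with (dist u v ^ 2) by ring. rewrite E.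
  unfold cross.
  replace (X a * Y u - Y a * X u - (X a * Y v - Y a * X v)) with
    (X a * (Y u - Y v) - Y a * (X u - X v)) by ring.
  pose proof (pow2_ge_0 (X a * (X u - X v) + Y a * (Y u - Y v))).
  replace ((X u - X v) ^ 2 + (Y u - Y v) ^ 2) with
    ((X a ^ 2 + Y a ^ 2) * ((X u - X v) ^ 2 + (Y u - Y v) ^ 2)) by (rewrite H0; ring).
  nra.
Qed.

Lemma cross_comp_cont (k : S1 -> S1) a p r :
  continuous_S1 k -> continuity_pt (fun s => cross a (k (rot p s))) r.
Proof.
  intro Hk. apply cont_pt_intro. intros eps He.
  destruct (Hk (rot p r) eps He) as [d [Hd H]]. exists d; split; auto.
  intros y Hy. eapply Rle_lt_trans; [apply cross_lip|].
  rewrite dist_sym. apply H. eapply Rle_lt_trans; [apply dist_rot|].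
  rewrite Rabs_minus_sym; exact Hy.
Qed.

Lemma cross_lt1 a b : 0 < dot a b -> -1 < cross a b < 1.
Proof. intro H. pose proof (cross_dot a b). split; nra. Qed.

Lemma ang_comp_cont (k : S1 -> S1) a p r :
  continuous_S1 k -> 0 < dot a (k (rot p r)) ->
  continuity_pt (fun s => ang a (k (rot p s))) r.
Proof.
  intros Hk Hd. unfold ang.
  apply (continuity_pt_comp (fun s => cross a (k (rot p s))) asin).
  - apply cross_comp_cont; auto.
  - apply derivable_continuous_pt, derivable_pt_asin, cross_lt1; auto.
Qed.

Lemma ivt (F : R -> R) a b :
  a <= b -> (forall z, a <= z <= b -> continuity_pt F z) -> F a * F b <= 0 ->
  exists z, a <= z <= b /\ F z = 0.
Proof.
  intros Hab Hc Hp.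
  destruct (Req_dec (F a) 0) as [Ha|Ha]; [exists a; split; [lra|auto]|].
  destruct (Req_dec (F b) 0) as [Hb|Hb]; [exists b; split; [lra|auto]|].
  destruct (Req_dec a b) as [<-|Hne]; [exfalso; nra|].
  destruct (Rlt_dec (F a) 0).
  - assert (0 < F b) by nra.
    destruct (IVT_interv F a b Hc ltac:(lra) ltac:(lra) ltac:(lra)) as [z Hz]. exists z; auto.
  - assert (F b < 0) by nra.
    destruct (IVT_interv (fun x => - F x) a b) as [z Hz].
    + intros z Hz; apply continuity_pt_opp; auto.
    + lra.
    + lra.
    + lra.
    + exists z; split; [tauto|lra].
Qed.

Lemma ivt_val (F : R -> R) a b v :
  a <= b -> (forall z, a <= z <= b -> continuity_pt F z) -> (F a - v) * (F b - v) <= 0 ->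
  exists z, a <= z <= b /\ F z = v.
Proof.
  intros Hab Hc Hp.
  destruct (ivt (fun x => F x - v) a b Hab) as [z [Hz Hz']]; auto.
  - intros z Hz. apply continuity_pt_minus; auto. apply continuity_pt_const. intros ? ?; auto.
  - exists z; split; auto; lra.
Qed.

Lemma between_inj (F : R -> R) a b :
  a <= b -> (forall z, a <= z <= b -> continuity_pt F z) ->
  (forall u v, a <= u <= b -> a <= v <= b -> F u = F v -> u = v) ->
  forall r, a <= r <= b -> Rmin (F a) (F b) <= F r <= Rmax (F a) (F b).
Proof.
  intros Hab Hc Hi r Hr.
  pose proof (Rmin_l (F a) (F b)); pose proof (Rmin_r (F a) (F b)).
  pose proof (Rmax_l (F a) (F b)); pose proof (Rmax_r (F a) (F b)).
  split.
  - destruct (Rle_dec (Rmin (F a) (F b)) (F r)) as [|Hn]; auto. exfalso.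
    set (v := (Rmin (F a) (F b) + F r) / 2).
    destruct (ivt_val F a r v ltac:(lra)) as [z1 [Hz1 E1]].
    { intros; apply Hc; lra. } { unfold v; nra. }
    destruct (ivt_val F r b v ltac:(lra)) as [z2 [Hz2 E2]].
    { intros; apply Hc; lra. } { unfold v; nra. }
    assert (z1 = z2) by (apply Hi; [lra|lra|congruence]).
    assert (z1 = r) by lra. subst. unfold v in E1; lra.
  - destruct (Rle_dec (F r) (Rmax (F a) (F b))) as [|Hn]; auto. exfalso.
    set (v := (Rmax (F a) (F b) + F r) / 2).
    destruct (ivt_val F a r v ltac:(lra)) as [z1 [Hz1 E1]].
    { intros; apply Hc; lra. } { unfold v; nra. }
    destruct (ivt_val F r b v ltac:(lra)) as [z2 [Hz2 E2]].
    { intros; apply Hc; lra. } { unfold v; nra. }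
    assert (z1 = z2) by (apply Hi; [lra|lra|congruence]).
    assert (z1 = r) by lra. subst. unfold v in E1; lra.
Qed.

Lemma cross_self a : cross a a = 0.
Proof. unfold cross; ring. Qed.

Lemma ang_self a : ang a a = 0.
Proof. unfold ang; rewrite cross_self; apply asin_0. Qed.

Lemma btw_bound a r : btw 0 (ang a a) r -> True.
Proof. auto. Qed.

Section Prop_arcs.
Variables (f g : S1 -> S1).
Hypothesis Hf : homeo_S1 f g.
Variables (eta c : R).
Hypothesis Heta : forall u v, dist u v < eta -> dist (f u) (f v) < 1.
Hypothesis Hc1 : c < eta.
Hypothesis Hc2 : c <= 1/2.

Lemma step_arc p q :
  dist p q <= c -> dist (f p) (f q) <= c ->
  forall r, btw 0 (ang p q) r ->
  exists r', btw 0 (ang (f p) (f q)) r' /\ f (rot p r) = rot (f p) r'.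
Proof.
  intros Hpq Hfpq r Hr.
  destruct Hf as [Hcf [Hcg [Hgf Hfg]]].
  assert (Dpq : 0 < dot p q) by (pose proof (dist_lt1_dot p q); lra).
  pose proof (ang_bound p q) as Hb.
  set (a := Rmin 0 (ang p q)). set (b := Rmax 0 (ang p q)).
  assert (Hab : a <= b) by (unfold a, b, Rmin, Rmax; destruct Rle_dec; lra).
  assert (Hab2 : forall z, a <= z <= b -> btw 0 (ang p q) z) by (intros; exact H).
  assert (Hzb : forall z, a <= z <= b -> - (PI/2) <= z <= PI/2).
  { intros z Hz. unfold a, b, Rmin, Rmax in Hz. pose proof PI_RGT_0. destruct Rle_dec; lra. }
  assert (F1 : forall z, a <= z <= b -> 0 < dot (f p) (f (rot p z))).
  { intros z Hz. cut (1/2 < dot (f p) (f (rot p z))); [lra|]. apply dist_lt1_dot. apply Heta.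
    pose proof (dist_rot_le p q z Dpq (Hab2 z Hz)). lra. }
  set (phi := fun s => ang (f p) (f (rot p s))).
  assert (F2 : forall z, a <= z <= b -> f (rot p z) = rot (f p) (phi z)).
  { intros z Hz. unfold phi. rewrite rot_ang; auto. }
  assert (Hcont : forall z, a <= z <= b -> continuity_pt phi z).
  { intros z Hz. apply ang_comp_cont; auto. }
  assert (Hinj : forall u v, a <= u <= b -> a <= v <= b -> phi u = phi v -> u = v).
  { intros u v Hu Hv E.
    assert (E2 : rot p u = rot p v).
    { rewrite <- (Hgf (rot p u)), <- (Hgf (rot p v)). f_equal.
      rewrite F2, F2, E; auto. }
    rewrite <- (ang_rot p u (Hzb u Hu)), <- (ang_rot p v (Hzb v Hv)), E2. reflexivity. }
  pose proof (between_inj phi a b Hab Hcont Hinj r Hr) as Hbt.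
  assert (P0 : phi 0 = 0) by (unfold phi; rewrite rot_0; apply ang_self).
  assert (P1 : phi (ang p q) = ang (f p) (f q)) by (unfold phi; rewrite rot_ang; auto).
  exists (phi r). split.
  - unfold btw. unfold a, b in Hbt. unfold Rmin, Rmax in Hbt |- *.
    destruct (Rle_dec 0 (ang p q)); rewrite ?P0, ?P1 in Hbt;
      destruct (Rle_dec 0 (ang (f p) (f q))); destruct (Rle_dec (ang (f p) (f q)) 0);
      try lra.
  - apply F2; exact Hr.
Qed.

Lemma iter_arc y1 y2 :
  (forall j, dist (Nat.iter j f y1) (Nat.iter j f y2) <= c) ->
  forall i r, btw 0 (ang y1 y2) r ->
  exists r', btw 0 (ang (Nat.iter i f y1) (Nat.iter i f y2)) r' /\
             Nat.iter i f (rot y1 r) = rot (Nat.iter i f y1) r'.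
Proof.
  intros Hj i. induction i as [|i IH]; intros r Hr.
  - exists r; simpl; auto.
  - destruct (IH r Hr) as [r1 [Hr1 E1]]. simpl.
    destruct (step_arc (Nat.iter i f y1) (Nat.iter i f y2) (Hj i) (Hj (S i)) r1 Hr1)
      as [r2 [Hr2 E2]].
    exists r2; split; auto. rewrite E1; auto.
Qed.

End Prop_arcs.

Lemma coord_bound a : -1 <= X a <= 1 /\ -1 <= Y a <= 1.
Proof. pose proof (unit a). split; split; nra. Qed.

Lemma valadh_use un l : ValAdh un l ->
  forall d, 0 < d -> forall N, exists p, (N <= p)%nat /\ Rabs (un p - l) < d.
Proof.
  intros H d Hd N. destruct (H (fun y => Rabs (y - l) < d) N) as [p Hp].
  - exists (mkposreal d Hd). intros y Hy; exact Hy.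
  - exists p; exact Hp.
Qed.

Lemma inv_small e : 0 < e -> exists k : nat, / (INR k + 1) < e.
Proof.
  intro He. destruct (archimed_cor1 e He) as [k [Hk Hk0]]. exists k.
  eapply Rle_lt_trans; [|exact Hk]. apply Rinv_le_contravar.
  - apply lt_0_INR; lia.
  - lra.
Qed.

Lemma inv_mono (k k' : nat) : (k <= k')%nat -> / (INR k' + 1) <= / (INR k + 1).
Proof.
  intro H. apply Rinv_le_contravar. pose proof (pos_INR k); lra.
  apply le_INR in H; lra.
Qed.

Lemma cluster (u : nat -> S1) :
  exists c : S1, forall r, 0 < r -> forall N, exists m, (N <= m)%nat /\ dist (u m) c < r.
Proof.
  destruct (Bolzano_Weierstrass (fun m => X (u m)) (fun z => -1 <= z <= 1) (compact_P3 (-1) 1))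
    as [l1 Hl1].
  { intro n; apply coord_bound. }
  assert (Hs : forall k : nat, exists p, (k <= p)%nat /\ Rabs (X (u p) - l1) < / (INR k + 1)).
  { intro k. apply (valadh_use _ _ Hl1). apply Rinv_0_lt_compat. pose proof (pos_INR k); lra. }
  set (sigma := fun k => proj1_sig (constructive_indefinite_description _ (Hs k))).
  assert (Hsig : forall k, (k <= sigma k)%nat /\ Rabs (X (u (sigma k)) - l1) < / (INR k + 1)).
  { intro k; unfold sigma; destruct constructive_indefinite_description; simpl; auto. }
  destruct (Bolzano_Weierstrass (fun k => Y (u (sigma k))) (fun z => -1 <= z <= 1) (compact_P3 (-1) 1))
    as [l2 Hl2].
  { intro n; apply coord_bound. }
  assert (Near : forall e, 0 < e -> forall N, exists m, (N <= m)%nat /\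
            Rabs (X (u m) - l1) < e /\ Rabs (Y (u m) - l2) < e).
  { intros e He N. destruct (inv_small e He) as [k Hk].
    destruct (valadh_use _ _ Hl2 e He (max N k)) as [k' [Hk' Hy]].
    exists (sigma k'). destruct (Hsig k') as [Hs1 Hs2]. split; [lia|]. split; auto.
    eapply Rlt_le_trans; [exact Hs2|]. eapply Rle_trans; [apply inv_mono with (k := k); lia|]. lra. }
  assert (Hunit : l1 ^ 2 + l2 ^ 2 = 1).
  { destruct (Req_dec (l1 ^ 2 + l2 ^ 2) 1) as [|Hne]; auto. exfalso.
    set (D := Rabs (l1 ^ 2 + l2 ^ 2 - 1)).
    assert (HD : 0 < D) by (apply Rabs_pos_lt; lra).
    set (e := Rmin 1 (D / 10)).
    assert (He : 0 < e) by (apply Rmin_pos; lra).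
    assert (He1 : e <= 1) by apply Rmin_l. assert (He2 : e <= D / 10) by apply Rmin_r.
    destruct (Near e He 0%nat) as [m [_ [H1 H2]]].
    pose proof (unit (u m)) as Hw. destruct (coord_bound (u m)) as [Bx By].
    assert (K : forall l w, Rabs (w - l) < e -> -1 <= w <= 1 -> Rabs (l ^ 2 - w ^ 2) <= 3 * e).
    { intros l w Hlw Hw1. replace (l ^ 2 - w ^ 2) with ((l - w) * (l + w)) by ring.
      rewrite Rabs_mult. rewrite Rabs_minus_sym in Hlw.
      assert (Rabs (l + w) <= 3).
      { apply Rabs_def2 in Hlw. apply Rabs_le; lra. }
      pose proof (Rabs_pos (l - w)). pose proof (Rabs_pos (l + w)). nra. }
    pose proof (K l1 (X (u m)) H1 Bx) as K1. pose proof (K l2 (Y (u m)) H2 By) as K2.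
    assert (D <= 6 * e).
    { unfold D. replace (l1 ^ 2 + l2 ^ 2 - 1) with
        ((l1 ^ 2 - X (u m) ^ 2) + (l2 ^ 2 - Y (u m) ^ 2)) by (rewrite <- Hw; ring).
      eapply Rle_trans; [apply Rabs_triang|]. lra. }
    lra. }
  exists (exist _ (l1, l2) Hunit).
  intros r Hr N. destruct (Near (r / 2) ltac:(lra) N) as [m [Hm [H1 H2]]].
  exists m; split; auto. unfold dist. change (fst (proj1_sig (u m))) with (X (u m)).
  change (snd (proj1_sig (u m))) with (Y (u m)).
  change (fst (proj1_sig (exist (fun p : R * R => fst p ^ 2 + snd p ^ 2 = 1) (l1, l2) Hunit))) with l1.
  change (snd (proj1_sig (exist (fun p : R * R => fst p ^ 2 + snd p ^ 2 = 1) (l1, l2) Hunit))) with l2.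
  rewrite <- (sqrt_pow2 r) by lra. apply sqrt_lt_1_alt. split.
  - pose proof (pow2_ge_0 (X (u m) - l1)); pose proof (pow2_ge_0 (Y (u m) - l2)); lra.
  - apply Rabs_def2 in H1; apply Rabs_def2 in H2.
    set (a1 := X (u m) - l1) in *. set (a2 := Y (u m) - l2) in *.
    assert (a1 ^ 2 < (r/2)^2) by nra. assert (a2 ^ 2 < (r/2)^2) by nra. nra.
Qed.

Lemma unif_cont (k : S1 -> S1) : continuous_S1 k ->
  forall eps, 0 < eps -> exists eta, 0 < eta /\ forall u v, dist u v < eta -> dist (k u) (k v) < eps.
Proof.
  intros Hk eps He. apply NNPP; intro Hn.
  assert (Hm : forall m : nat, exists uv : S1 * S1,
    dist (fst uv) (snd uv) < / (INR m + 1) /\ eps <= dist (k (fst uv)) (k (snd uv))).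
  { intro m. apply NNPP; intro Hm. apply Hn. exists (/ (INR m + 1)); split.
    - apply Rinv_0_lt_compat; pose proof (pos_INR m); lra.
    - intros u v Huv. apply Rnot_le_lt; intro Hle. apply Hm. exists (u, v); auto. }
  set (W := fun m => proj1_sig (constructive_indefinite_description _ (Hm m))).
  assert (HW : forall m, dist (fst (W m)) (snd (W m)) < / (INR m + 1) /\
                         eps <= dist (k (fst (W m))) (k (snd (W m)))).
  { intro m; unfold W; destruct constructive_indefinite_description; simpl; auto. }
  destruct (cluster (fun m => fst (W m))) as [c Hc].
  destruct (Hk c (eps / 2) ltac:(lra)) as [rho [Hrho Hk']].
  destruct (inv_small (rho / 2) ltac:(lra)) as [k0 Hk0].
  destruct (Hc (rho / 2) ltac:(lra) k0) as [m [Hm1 Hm2]]. simpl in Hm2.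
  destruct (HW m) as [W1 W2].
  pose proof (inv_mono k0 m Hm1).
  assert (dist c (snd (W m)) < rho).
  { eapply Rle_lt_trans; [apply (dist_tri _ (fst (W m)))|]. rewrite dist_sym. lra. }
  assert (dist c (fst (W m)) < rho) by (rewrite dist_sym; lra).
  pose proof (Hk' _ H0). pose proof (Hk' _ H1).
  pose proof (dist_tri (k (fst (W m))) (k c) (k (snd (W m)))).
  rewrite (dist_sym (k (fst (W m))) (k c)) in H4. lra.
Qed.

Section NW.
Variable f : S1 -> S1.
Hypothesis Hcf : continuous_S1 f.

Lemma nw_invariant x : nonwandering f x -> nonwandering f (f x).
Proof.
  intros Hx U [r [Hr HU]].
  destruct (Hcf x r Hr) as [rho [Hrho Hc]].
  destruct (Hx (fun w => dist x w < rho)) as [n [Hn [y [Hy1 Hy2]]]].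
  { exists rho; split; auto. }
  exists n; split; auto. exists (f y); split.
  - apply HU, Hc, Hy1.
  - rewrite <- Nat.iter_succ_r, Nat.iter_succ. apply HU, Hc, Hy2.
Qed.

Lemma nw_iter x m : nonwandering f x -> nonwandering f (Nat.iter m f x).
Proof.
  intro H. induction m as [|m IH]; simpl; auto. apply nw_invariant; auto.
Qed.

Lemma orbit_cluster (z : S1) :
  exists c, forall r, 0 < r -> forall N, exists m, (N <= m)%nat /\ dist (Nat.iter m f z) c < r.
Proof. apply (cluster (fun m => Nat.iter m f z)). Qed.

Lemma nw_exists (z : S1) : exists p, nonwandering f p.
Proof.
  destruct (orbit_cluster z) as [c Hc]. exists c.
  intros U [r [Hr HU]].
  destruct (Hc r Hr 0%nat) as [m1 [_ H1]].
  destruct (Hc r Hr (S m1)) as [m2 [H2a H2]].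
  exists (m2 - m1)%nat; split; [lia|].
  exists (Nat.iter m1 f z); split.
  - apply HU; rewrite dist_sym; auto.
  - rewrite <- Nat.iter_add. replace (m2 - m1 + m1)%nat with m2 by lia.
    apply HU; rewrite dist_sym; auto.
Qed.

Lemma recurrent p : nonwandering f p -> forall d, 0 < d ->
  exists x n, nonwandering f x /\ (n >= 1)%nat /\ dist (Nat.iter n f x) x < d.
Proof.
  intros Hp d Hd. destruct (orbit_cluster p) as [c Hc].
  destruct (Hc (d / 2) ltac:(lra) 0%nat) as [m1 [_ H1]].
  destruct (Hc (d / 2) ltac:(lra) (S m1)) as [m2 [H2a H2]].
  exists (Nat.iter m1 f p), (m2 - m1)%nat. split; [apply nw_iter; auto|]. split; [lia|].
  rewrite <- Nat.iter_add. replace (m2 - m1 + m1)%nat with m2 by lia.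
  pose proof (dist_tri (Nat.iter m2 f p) c (Nat.iter m1 f p)).
  rewrite (dist_sym c) in H. lra.
Qed.

End NW.

Lemma ziter_nat f g (m : nat) y : ziter f g (Z.of_nat m) y = Nat.iter m f y.
Proof.
  destruct m as [|m]; [reflexivity|]. simpl. rewrite SuccNat2Pos.id_succ. reflexivity.
Qed.

Lemma xs_step (f : S1 -> S1) x n delta :
  (n >= 1)%nat -> dist (Nat.iter n f x) x < delta -> 0 < delta ->
  forall i : Z,
  dist (f (Nat.iter (Z.to_nat (i mod Z.of_nat n)) f x))
       (Nat.iter (Z.to_nat ((i + 1) mod Z.of_nat n)) f x) <= delta.
Proof.
  intros Hn Hx Hd i. set (N := Z.of_nat n).
  assert (HN : (0 < N)%Z) by (unfold N; lia).
  pose proof (Z.mod_pos_bound i N HN) as Hr.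
  rewrite <- Z.add_mod_idemp_l by lia.
  set (r := (i mod N)%Z) in *.
  destruct (Z.eq_dec (r + 1) N) as [E|E].
  - rewrite E, Z.mod_same by lia. simpl.
    replace (Z.to_nat r) with (n - 1)%nat by (unfold N in E; lia).
    rewrite <- Nat.iter_succ. replace (S (n - 1)) with n by lia. lra.
  - rewrite Z.mod_small by lia.
    replace (Z.to_nat (r + 1)) with (S (Z.to_nat r)) by lia.
    rewrite Nat.iter_succ, dist_refl. lra.
Qed.

Lemma S1_one_ok : fst (1, 0) ^ 2 + snd (1, 0) ^ 2 = 1.
Proof. simpl. ring. Qed.
Definition S1_one : S1 := exist _ (1, 0) S1_one_ok.

Theorem corollary2 (f g : S1 -> S1) (Hf : homeo_S1 f g)
  (Hpotp : POTP_on (nonwandering f) f g) :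
  exists (x : S1) (n : nat), (n >= 1)%nat /\ Nat.iter n f x = x.
Proof.
  pose proof Hf as Hf'. destruct Hf' as [Hcf [Hcg [Hgf Hfg]]].
  destruct (unif_cont f Hcf 1 ltac:(lra)) as [eta [Heta Hu]].
  set (eps := Rmin (eta / 4) (1 / 8)).
  assert (He : 0 < eps) by (apply Rmin_pos; lra).
  assert (He1 : eps <= eta / 4) by apply Rmin_l.
  assert (He2 : eps <= 1 / 8) by apply Rmin_r.
  destruct (Hpotp eps He) as [delta [Hdel Hsh]].
  destruct (nw_exists f S1_one) as [p Hp].
  destruct (recurrent f Hcf p Hp delta Hdel) as [x [n [Hx [Hn Hxn]]]].
  set (xs := fun i : Z => Nat.iter (Z.to_nat (i mod Z.of_nat n)) f x).
  destruct (Hsh xs) as [y [_ Hy]].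
  { intro i; unfold xs; apply nw_iter; auto. }
  { intro i; unfold xs; apply xs_step; auto. }
  assert (Hym : forall m, dist (Nat.iter m f y) (Nat.iter (m mod n) f x) <= eps).
  { intro m. pose proof (Hy (Z.of_nat m)) as H. rewrite ziter_nat in H. unfold xs in H.
    rewrite <- Nat2Z.inj_mod, Nat2Z.id in H. exact H. }
  set (z := fun k => Nat.iter (k * n) f y).
  assert (Hz1 : forall k i, dist (Nat.iter i f (z k)) (Nat.iter i f (z (S k))) <= 2 * eps).
  { intros k i. unfold z. rewrite <- !Nat.iter_add.
    pose proof (Hym (i + k * n)%nat) as A. pose proof (Hym (i + S k * n)%nat) as B.
    rewrite Nat.Div0.mod_add in A, B.
    pose proof (dist_tri (Nat.iter (i + k * n) f y) (Nat.iter (i mod n) f x) (Nat.iter (i + S k * n) f y)).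
    rewrite (dist_sym (Nat.iter (i mod n) f x)) in H. lra. }
  assert (Hz2 : forall k, dist x (z k) <= eps).
  { intro k. unfold z. pose proof (Hym (k * n)%nat) as A. rewrite Nat.Div0.mod_mul in A.
    simpl in A. rewrite dist_sym; exact A. }
  assert (Hz3 : forall k, Nat.iter n f (z k) = z (S k)).
  { intro k. unfold z. rewrite <- Nat.iter_add. reflexivity. }
  set (h := Nat.iter n f).
  assert (Hch : continuous_S1 h) by (apply cont_iter; auto).
  pose proof PI_RGT_0 as HPI.
  set (t := fun k => ang x (z k)).
  set (a := fun k => ang (z k) (z (S k))).
  assert (Dxz : forall k, 0 < dot x (z k)).
  { intro k. cut (1/2 < dot x (z k)); [lra|]. apply dist_lt1_dot. pose proof (Hz2 k). lra. }
  assert (Ez : forall k, z k = rot x (t k)).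
  { intro k. unfold t. rewrite rot_ang; auto. }
  assert (Bt : forall k, Rabs (t k) < PI / 4).
  { intro k. apply ang_small. pose proof (Hz2 k); lra. }
  assert (Hzz : forall k, dist (z k) (z (S k)) <= 2 * eps) by (intro k; apply (Hz1 k 0%nat)).
  assert (Ba : forall k, Rabs (a k) < PI / 4).
  { intro k. apply ang_small. pose proof (Hzz k); lra. }
  assert (Dzz : forall k, 0 < dot (z k) (z (S k))).
  { intro k. cut (1/2 < dot (z k) (z (S k))); [lra|]. apply dist_lt1_dot. pose proof (Hzz k). lra. }
  assert (Ta : forall k, t (S k) = t k + a k).
  { intro k. unfold t at 1. rewrite <- (rot_ang (z k) (z (S k)) (Dzz k)).
    fold (a k). rewrite (Ez k) at 1. rewrite rot_rot. apply ang_rot.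
    pose proof (Bt k); pose proof (Ba k).
    apply Rabs_def2 in H; apply Rabs_def2 in H0. lra. }
  set (G := fun s => ang x (h (rot x s))).
  assert (KG : forall k s, btw (t k) (t (S k)) s ->
     h (rot x s) = rot x (G s) /\ btw (t (S k)) (t (S (S k))) (G s) /\
     0 < dot x (h (rot x s))).
  { intros k s Hs.
    assert (Hr : btw 0 (a k) (s - t k)).
    { unfold btw in *. rewrite Ta in Hs. unfold Rmin, Rmax in *.
      destruct (Rle_dec (t k) (t k + a k)); destruct (Rle_dec 0 (a k)); lra. }
    destruct (iter_arc f g Hf eta (2 * eps) Hu ltac:(lra) ltac:(lra) (z k) (z (S k))
                (Hz1 k) n (s - t k) Hr) as [r' [Hr' E]].
    fold h in E, Hr'. rewrite !Hz3 in Hr'. rewrite Hz3 in E. fold (a (S k)) in Hr'.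
    assert (Ers : rot x s = rot (z k) (s - t k)).
    { rewrite Ez, rot_rot. f_equal. ring. }
    set (w := t (S k) + r').
    assert (Hw : h (rot x s) = rot x w).
    { rewrite Ers, E, Ez, rot_rot. reflexivity. }
    assert (Bw : - (PI/2) < w < PI/2).
    { unfold w. pose proof (Bt (S k)). pose proof (Ba (S k)).
      apply Rabs_def2 in H; apply Rabs_def2 in H0. unfold btw, Rmin, Rmax in Hr'.
      destruct (Rle_dec 0 (a (S k))); lra. }
    assert (Gw : G s = w).
    { unfold G. rewrite Hw. apply ang_rot; lra. }
    split; [rewrite Gw; auto|]. split.
    - rewrite Gw. unfold w. rewrite (Ta (S k)). unfold btw, Rmin, Rmax in Hr' |- *.
      destruct (Rle_dec 0 (a (S k))); destruct (Rle_dec (t (S k)) (t (S k) + a (S k))); lra.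
    - rewrite Hw, dot_rot. apply cos_gt_0; lra. }
  assert (Gt : forall k, G (t k) = t (S k)).
  { intro k. unfold G. rewrite <- Ez. fold (h). unfold h. rewrite Hz3. reflexivity. }
  destruct (classic (exists k, a k * a (S k) <= 0)) as [[k Hk]|Hnk].
  - (* a sign change : intermediate value theorem *)
    set (lo := Rmin (t k) (t (S k))). set (hi := Rmax (t k) (t (S k))).
    assert (Hlh : lo <= hi) by (unfold lo, hi, Rmin, Rmax; destruct Rle_dec; lra).
    destruct (ivt (fun s => G s - s) lo hi Hlh) as [s [Hs Hs0]].
    + intros s Hs. apply continuity_pt_minus.
      * unfold G. apply ang_comp_cont; auto. apply (KG k s); exact Hs.
      * apply derivable_continuous_pt, derivable_pt_id.
    + assert (E1 : G (t k) - t k = a k) by (rewrite Gt, Ta; ring).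
      assert (E2 : G (t (S k)) - t (S k) = a (S k)) by (rewrite Gt, (Ta (S k)); ring).
      unfold lo, hi, Rmin, Rmax. destruct Rle_dec; rewrite E1, E2; lra.
    + exists (rot x s), n. split; auto.
      destruct (KG k s Hs) as [E _]. fold h. rewrite E. f_equal. lra.
  - (* monotone case *)
    assert (Hpos : forall k, 0 < a k * a (S k)).
    { intro k. apply Rnot_le_lt. intro. apply Hnk. exists k; auto. }
    assert (Hsg : forall k, 0 < a 0%nat * a k).
    { induction k as [|k IH].
      - pose proof (Hpos 0%nat). destruct (Rtotal_order (a 0%nat) 0) as [|[|]]; nra.
      - pose proof (Hpos k).
        destruct (Rtotal_order (a k) 0) as [|[|]];
        destruct (Rtotal_order (a 0%nat) 0) as [|[|]]; nra. }
    assert (Hlim : exists L, Un_cv t L).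
    { destruct (Rtotal_order (a 0%nat) 0) as [Hneg|[Hz|Hpos0]].
      - destruct (decreasing_cv t) as [L HL].
        + intro k. rewrite Ta. pose proof (Hsg k). assert (a k < 0) by nra. lra.
        + exists (PI/4). intros v [k ->]. unfold opp_seq. pose proof (Bt k). apply Rabs_def2 in H. lra.
        + exists L; auto.
      - pose proof (Hsg 0%nat). rewrite Hz in H. lra.
      - destruct (growing_cv t) as [L HL].
        + intro k. rewrite Ta. pose proof (Hsg k). assert (0 < a k) by nra. lra.
        + exists (PI/4). intros v [k ->]. pose proof (Bt k). apply Rabs_def2 in H. lra.
        + exists L; auto. }
    destruct Hlim as [L HL].
    exists (rot x L), n. split; auto. fold h.
    apply dist_0_eq. apply Rle_antisym; [|apply dist_pos].
    apply Rnot_lt_le. intro Hpos'.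
    set (e0 := dist (h (rot x L)) (rot x L)) in *.
    destruct (Hch (rot x L) (e0 / 2) ltac:(lra)) as [rho [Hrho Hc]].
    destruct (HL (Rmin rho (e0 / 2)) ltac:(apply Rmin_pos; lra)) as [N HN].
    pose proof (HN N (le_n N)) as A. pose proof (HN (S N) ltac:(lia)) as B.
    unfold R_dist in A, B. pose proof (Rmin_l rho (e0/2)). pose proof (Rmin_r rho (e0/2)).
    assert (D1 : dist (rot x L) (z N) < rho).
    { rewrite Ez. eapply Rle_lt_trans; [apply dist_rot|]. rewrite Rabs_minus_sym. lra. }
    pose proof (Hc _ D1) as C1. unfold h in C1. rewrite Hz3 in C1. fold h in C1.
    assert (D2 : dist (z (S N)) (rot x L) < e0 / 2).
    { rewrite Ez. eapply Rle_lt_trans; [apply dist_rot|]. lra. }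
    pose proof (dist_tri (h (rot x L)) (z (S N)) (rot x L)). fold e0 in H1. lra.
Qed.
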